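(* Let $p_0>0$ and $r>1$, and run the multiplicative price update algorithm on truthful input (true types $(v_i,\mathcal S_i)$) in a fixed order $i=1,\dots,n$, obtaining $S=(S_1,\dots,S_n)$. For each good $e$ let $\ell_e^*=|\{i: e\in S_i\}|$ and $p_e^*=p_0 r^{\ell_e^*}$, and let $v(S)=\sum_{i=1}^n v_i(S_i)$. Then $$v(S)\ge \frac{1}{r-1}\Big(\sum_{e\in\mathsf U}p_e^*-m p_0\Big)\qquad\text{and}\qquad v(S)\ge \mathrm{OPT}-b\sum_{e\in\mathsf U}p_e^*,$$ where $\mathrm{OPT}$ is the maximum of $\sum_i v_i(T_i)$ over all allocations $(T_1,\dots,T_n)$ in which every good belongs to at most $b$ of the sets $T_i$.
   Context: Multi-unit combinatorial auction: a set $\mathsf U$ of $m$ goods, each available in $b\ge1$ copies; $n$ bidders, bidder $i$ having a collection $\mathcal S_i$ of $k$ nonempty subsets of $\mathsf U$ and valuation $v_i:\mathcal S_i\to\mathbb R_{\ge0}$, extended to all $T\subseteq\mathsf U$ by $v_i(T)=\max\{v_i(S'):S'\in\mathcal S_i, S'\subseteq T\}$ ($0$ if none). Multiplicative price update algorithm (parameters $p_0,r$): set $p_e^1=p_0$ for all goods $e$; for $i=1,\dots,n$: let $S_i$ be a set maximizing $v_i(S)$ among $S\in\mathcal S_i$ with $v_i(S)\ge\sum_{e\in S}p_e^i$ ($S_i=\emptyset$ if there is none); set $p_e^{i+1}=r\,p_e^i$ for $e\in S_i$ and $p_e^{i+1}=p_e^i$ otherwise; output $(S_1,\dots,S_n)$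 (which need not respect the supply $b$). *)

(* Defs.v *)
From HB Require Import structures.
From mathcomp Require Import all_boot all_order all_algebra.
Set Implicit Arguments. Unset Strict Implicit. Unset Printing Implicit Defensive.
Import Order.TTheory GRing.Theory Num.Theory.
Local Open Scope ring_scope.

(* Goods: a finite type U (m = #|U|); bidders: 'I_n.
   Bidder i has a collection C i : {set {set U}} of nonempty bundles and a
   valuation v i : {set U} -> R (only its values on C i matter). *)

Definition vext (R : realFieldType) (U : finType) (C : {set {set U}})
    (v : {set U} -> R) (T : {set U}) : R :=
  \big[Num.max/0]_(S' in C | S' \subset T) v S'.

Definition load_before (U : finType) (n : nat) (S : 'I_n -> {set U})
    (i : 'I_n) (e : U) : nat :=
  #|[set j : 'I_n | (j < i)%N && (e \in S j)]|.

Definition price (R : realFieldType) (U : finType) (n : nat)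
    (p0 r : R) (S : 'I_n -> {set U}) (i : 'I_n) (e : U) : R :=
  p0 * r ^+ load_before S i e.

Definition load (U : finType) (n : nat) (S : 'I_n -> {set U}) (e : U) : nat :=
  #|[set i : 'I_n | e \in S i]|.

(* S is a possible output of the multiplicative price update algorithm
   (any tie-breaking among maximizers). *)
Definition mpu_run (R : realFieldType) (U : finType) (n : nat) (p0 r : R)
    (C : 'I_n -> {set {set U}}) (v : 'I_n -> {set U} -> R)
    (S : 'I_n -> {set U}) : Prop :=
  forall i : 'I_n,
    [/\ S i \in C i,
        \sum_(e in S i) price p0 r S i e <= v i (S i)
      & forall S', S' \in C i ->
          \sum_(e in S') price p0 r S i e <= v i S' -> v i S' <= v i (S i)]
    \/
    (S i = set0 /\
     forall S', S' \in C i -> v i S' < \sum_(e in S') price p0 r S i e).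

Definition feasible (U : finType) (n b : nat) (T : 'I_n -> {set U}) : Prop :=
  forall e : U, (#|[set i : 'I_n | e \in T i]| <= b)%N.

(* Main.v *)
Require Import Defs.
From HB Require Import structures.
From mathcomp Require Import all_boot all_order all_algebra.
From mathcomp Require Import ring.
Import Order.TTheory GRing.Theory Num.Theory.
Local Open Scope ring_scope.

Section Helpers.
Variable R : realFieldType.

Lemma vext_ge0 (U : finType) (C : {set {set U}}) (v : {set U} -> R) (T : {set U}) :
  0 <= vext C v T.
Proof.
rewrite /vext; elim/big_rec: _ => // i x _ hx.
by rewrite le_max hx orbT.
Qed.

Lemma vext_ge (U : finType) (C : {set {set U}}) (v : {set U} -> R) (T : {set U}) S' :
  S' \in C -> S' \subset T -> v S' <= vext C v T.
Proof.
move=> hC hT; rewrite /vext (bigD1 S') ?hC ?hT //=.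
by rewrite le_max lexx.
Qed.

Lemma vext_le (U : finType) (C : {set {set U}}) (v : {set U} -> R) (T : {set U}) X :
  0 <= X -> (forall S', S' \in C -> S' \subset T -> v S' <= X) ->
  vext C v T <= X.
Proof.
move=> h0 h; rewrite /vext; elim/big_rec: _ => // S' x /andP[h1 h2] hx.
by rewrite ge_max hx h.
Qed.

Lemma telesc (n : nat) (P : pred 'I_n) (r : R) (m : nat) : (m <= n)%N ->
  \sum_(i : 'I_n | (i < m)%N && P i) (r - 1) * r ^+ #|[set j : 'I_n | (j < i)%N && P j]|
  = r ^+ #|[set j : 'I_n | (j < m)%N && P j]| - 1.
Proof.
elim: m => [|m IH] hm.
  rewrite big_pred0; last by move=> i.
  have -> : [set j : 'I_n | (j < 0)%N && P j] = set0.
    by apply/setP => j; rewrite !inE.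
  by rewrite cards0 expr0 subrr.
have hmn : (m < n)%N by [].
set im := Ordinal hmn.
have := IH (ltnW hm) => {}IH.
have Ec : #|[set j : 'I_n | (j < im)%N && P j]| = #|[set j : 'I_n | (j < m)%N && P j]|.
  by [].
case hP : (P im).
- rewrite (bigD1 im) /=; last by rewrite ltnSn hP.
  rewrite (eq_bigl (fun i : 'I_n => (i < m)%N && P i)); last first.
    move=> i; rewrite ltnS leq_eqVlt; case: (i =P im) => [->|hne] /=.
      by rewrite ltnn andbF.
    have : (nat_of_ord i == m) = false.
      by apply/negbTE/eqP => h; apply: hne; apply: val_inj.
    by move=> ->; rewrite andbT.
  rewrite IH Ec.
  have -> : [set j : 'I_n | (j < m.+1)%N && P j] = im |: [set j : 'I_n | (j < m)%N && P j].
    apply/setP => j; rewrite !inE ltnS leq_eqVlt.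
    case: (j =P im) => [->|hne] /=; first by rewrite eqxx hP.
    have : (nat_of_ord j == m) = false.
      by apply/negbTE/eqP => h; apply: hne; apply: val_inj.
    by move=> ->.
  rewrite cardsU1 inE ltnn /= add1n exprS mulrBl mul1r addrA subrK //.
- have -> : [set j : 'I_n | (j < m.+1)%N && P j] = [set j : 'I_n | (j < m)%N && P j].
    apply/setP => j; rewrite !inE ltnS leq_eqVlt.
    case: (j =P im) => [->|hne] /=; first by rewrite ltnn hP !andbF.
    have : (nat_of_ord j == m) = false.
      by apply/negbTE/eqP => h; apply: hne; apply: val_inj.
    by move=> ->.
  rewrite -IH; apply: eq_bigl.
    move=> i; rewrite ltnS leq_eqVlt; case: (i =P im) => [->|hne] /=.
      by rewrite ltnn hP !andbF.
    have : (nat_of_ord i == m) = false.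
      by apply/negbTE/eqP => h; apply: hne; apply: val_inj.
    by move=> ->.
Qed.

End Helpers.

Theorem lemma2 (R : realFieldType) (U : finType) (n k b : nat)
    (C : 'I_n -> {set {set U}}) (v : 'I_n -> {set U} -> R)
    (p0 r : R) (S : 'I_n -> {set U}) :
  (0 < b)%N ->
  (forall i, #|C i| = k) ->
  (forall i, forall S', S' \in C i -> S' != set0) ->
  (forall i, forall S', S' \in C i -> 0 <= v i S') ->
  0 < p0 -> 1 < r ->
  mpu_run p0 r C v S ->
  let vS := \sum_(i < n) vext (C i) (v i) (S i) in
  let pstar := fun e : U => p0 * r ^+ load S e in
  vS >= (r - 1)^-1 * (\sum_(e : U) pstar e - #|U|%:R * p0) /\
  (forall T : 'I_n -> {set U}, feasible b T ->
     vS >= \sum_(i < n) vext (C i) (v i) (T i) - b%:R * \sum_(e : U) pstar e).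
Proof.
move=> hb hk hne hv0 hp0 hr hrun vS pstar.
have hr1 : 0 < r - 1 by rewrite subr_gt0.
have pst0 : forall e, 0 <= pstar e.
  move=> e; apply: mulr_ge0; [exact: ltW | apply: exprn_ge0; exact: ltW (lt_trans ltr01 hr)].
have price_le : forall i e, price p0 r S i e <= pstar e.
  move=> i e; rewrite /price /pstar ler_pM2l // ler_eXn2l //.
  apply: subset_leq_card; apply/subsetP => j; rewrite !inE => /andP[_ ->] //.
split.
- have key : \sum_(e : U) pstar e - #|U|%:R * p0 =
      (r - 1) * \sum_(i < n) \sum_(e in S i) price p0 r S i e.
    rewrite mulr_natl -sumr_const -sumrB.
    under eq_bigr => e _.
      rewrite /pstar -[X in _ - X]mulr1 -mulrBr.
      have := @telesc R n (fun i : 'I_n => e \in S i) r n (leqnn n).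
      have -> : #|[set j : 'I_n | (j < n)%N && (e \in S j)]| = load S e.
        by apply: eq_card => j; rewrite !inE ltn_ord.
      move=> <-.
      over.
    have E : (r - 1) * \sum_(i < n) \sum_(e in S i) price p0 r S i e =
        \sum_(i < n) \sum_(e : U) (if e \in S i then (r - 1) * price p0 r S i e else 0).
      rewrite mulr_sumr; apply: eq_bigr => i _.
      by rewrite mulr_sumr big_mkcond.
    rewrite E exchange_big /=; apply: eq_bigr => e _.
    rewrite big_mkcond mulr_sumr; apply: eq_bigr => i _; rewrite ltn_ord /=.
    by case: (e \in S i); rewrite ?mulr0 // /price mulrA mulrCA mulrA.
  rewrite key mulrA mulVf ?mul1r; last by rewrite gt_eqF.
  apply: ler_sum => i _.
  case: (hrun i) => [[hC hle _]|[-> _]].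
  + by apply: (le_trans hle); apply: vext_ge.
  + by rewrite big_set0 vext_ge0.
- move=> T hT.
  have per : forall i, vext (C i) (v i) (T i) <=
      vext (C i) (v i) (S i) + \sum_(e in T i) pstar e.
    move=> i.
    have hsum0 : 0 <= \sum_(e in T i) pstar e by apply: sumr_ge0.
    apply: vext_le; first by rewrite addr_ge0 ?vext_ge0.
    move=> S' hS' hsub.
    have unaff : v i S' < \sum_(e in S') price p0 r S i e ->
        v i S' <= vext (C i) (v i) (S i) + \sum_(e in T i) pstar e.
      move=> hlt; apply: (le_trans (ltW hlt)).
      rewrite -[X in X <= _]add0r lerD ?vext_ge0 //.
      rewrite big_mkcond [X in _ <= X]big_mkcond /=; apply: ler_sum => e _.
      case: ifP => he; first by rewrite (subsetP hsub _ he) price_le.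
      by case: ifP.
    case: (hrun i) => [[hC hle hmax]|[_ hall]]; last by apply: unaff; apply: hall.
    case: (leP (\sum_(e in S') price p0 r S i e) (v i S')) => h; last exact: unaff.
    apply: (le_trans (hmax _ hS' h)); apply: (le_trans (@vext_ge R U (C i) (v i) (S i) (S i) hC (subxx _))).
    by rewrite lerDl.
  rewrite lerBlDr; apply: (le_trans (ler_sum _ (fun i _ => per i))).
  rewrite big_split /= lerD2l.
  under eq_bigr => i _ do rewrite big_mkcond /=.
  rewrite exchange_big /= mulr_sumr; apply: ler_sum => e _.
  rewrite -big_mkcond /=.
  rewrite (eq_bigl (fun i => i \in [set i : 'I_n | e \in T i])); last by move=> i; rewrite inE.
  rewrite sumr_const -[X in X <= _]mulr_natl; apply: ler_wpM2r => //; rewrite ler_nat.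
  exact: hT.
Qed.
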